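(* Let $\mathcal{V}$ be a finite vocabulary, let $\mathbf{x}$ be a prompt, and consider responses (trajectories) $\tau=[y_1,\dots,y_T]\in\mathcal{V}^T$ of length $T$. Let $r(\mathbf{x},\tau)$ be a target reward, let $\pi_{\mathrm{SFT}}$ be a reference token-level policy with induced trajectory distribution $\rho_{\mathrm{SFT}}$, and let $\beta>0$ and $\alpha>0$. Let $\rho_{\mathrm{BL}}$ be the baseline trajectory-level policy aligned with the target reward, $$\rho_{\mathrm{BL}}(\cdot\mid \mathbf{x})=\arg\max_{\rho}\ \mathbb{E}_{\tau\sim\rho(\cdot\mid\mathbf{x})}[r(\mathbf{x},\tau)]-\beta\,\mathbb{D}_{\mathrm{KL}}\big[\rho(\cdot\mid\mathbf{x})\,\|\,\rho_{\mathrm{SFT}}(\cdot\mid\mathbf{x})\big],$$ i.e. $\rho_{\mathrm{BL}}(\tau\mid\mathbf{x})=\frac{1}{Z(\mathbf{x})}\rho_{\mathrm{SFT}}(\tau\mid\mathbf{x})\exp(r(\mathbf{x},\tau)/\beta)$, and let $\pi_{\mathrm{BL}}$ be the token-level policy inducing $\rho_{\mathrm{BL}}$. For a state $\mathbf{s}_t=[\mathbf{x},\mathbf{y}_{<t}]$ and token $z$, define $$\mathrm{TQ}^\star(\mathbf{s}_t,z)=\mathbb{E}_{\tau\sim\rho_{\mathrm{BL}}(\cdot\mid \mathbf{s}_t,z)}\big[r([\mathbf{s}_t,z],\tau)\big],$$ and define the decoding policy $$\pi_{\mathrm{alg}}(\cdot\mid\mathbf{s}_t)=\arg\max_{\pi}\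 \mathbb{E}_{z\sim\pi(\cdot\mid\mathbf{s}_t)}[\mathrm{TQ}^\star(\mathbf{s}_t,z)]-\alpha\,\mathbb{D}_{\mathrm{KL}}\big[\pi(\cdot\mid\mathbf{s}_t)\,\|\,\pi_{\mathrm{BL}}(\cdot\mid\mathbf{s}_t)\big],$$ equivalently $\pi_{\mathrm{alg}}(z\mid\mathbf{s}_t)\propto \pi_{\mathrm{BL}}(z\mid\mathbf{s}_t)\exp(\mathrm{TQ}^\star(\mathbf{s}_t,z)/\alpha)$, with induced trajectory distribution $\rho_{\mathrm{alg}}$. Let $V^*(\mathbf{x})=\max_{\rho}\mathbb{E}_{\tau\sim\rho(\cdot\mid\mathbf{x})}[r(\mathbf{x},\tau)]$ with maximizer $\rho^*$, let $V^{\mathrm{alg}}(\mathbf{x})=\mathbb{E}_{\tau\sim\rho_{\mathrm{alg}}(\cdot\mid\mathbf{x})}[r(\mathbf{x},\tau)]$, and let $\texttt{Sub-Gap}(\mathbf{x})=V^*(\mathbf{x})-V^{\mathrm{alg}}(\mathbf{x})$. Then: (1) For all $\mathbf{x}$, $$\texttt{Sub-Gap}(\mathbf{x})\le \beta\,\mathbb{D}_{\mathrm{KL}}\big(\rho^*(\cdot\mid\mathbf{x})\,\|\,\rho_{\mathrm{SFT}}(\cdot\mid\mathbf{x})\big)-\alpha\, h_\alpha(\mathbf{x}),$$ where $h_\alpha(\mathbf{x})=\sum_{t=1}^{T-1}\mathbb{E}_{\mathbf{y}_{<t}\sim\rho_{\mathrm{alg}}(\cdot\mid\mathbf{x})}\Big[\mathbb{D}_{\mathrm{KL}}\big(\pi_{\mathrm{alg}}(\cdot\mid[\mathbf{x},\mathbf{y}_{<t}])\,\|\,\pi_{\mathrm{BL}}(\cdot\mid[\mathbf{x},\mathbf{y}_{<t}])\big)\Big]\ge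 0$ (with $\mathbf{y}_{<1}$ the empty prefix). (2) If moreover $0\le r\le R_{\max}$, then $$\mathbb{D}_{\mathrm{KL}}\big(\rho_{\mathrm{alg}}(\cdot\mid\mathbf{x})\,\|\,\rho_{\mathrm{SFT}}(\cdot\mid\mathbf{x})\big)\le\Big(\frac{1}{\beta}+\frac{T}{\alpha}\Big)R_{\max}.$$
   Context: Language generation is modeled as a token-level MDP: a state $\mathbf{s}_t=[\mathbf{x},\mathbf{y}_{<t}]$ is the prompt concatenated with the tokens generated so far, an action is the next token $z\in\mathcal{V}$, and transitions are deterministic concatenation. A token-level policy $\pi(\cdot\mid\mathbf{s}_t)$ induces a trajectory-level distribution $\rho_\pi(\mathbf{y}\mid\mathbf{x})=\prod_{t}\pi(y_t\mid[\mathbf{x},\mathbf{y}_{<t}])$; conditional trajectory distributions such as $\rho(\cdot\mid\mathbf{s}_t,z)$ denote the distribution of the completion $\tau$ given the prefix $[\mathbf{s}_t,z]$, and $r([\mathbf{s}_t,z],\tau)$ is the reward of the full response obtained by concatenation. $Z(\mathbf{x})$ is the normalizing constant. This is the ''direct transfer'' setting, in which the baseline aligned model is aligned with the same target reward $r$. *)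

(* Defs.v *)
From mathcomp Require Import all_boot all_order all_algebra.
From mathcomp Require Import all_classical all_reals all_analysis.
Set Implicit Arguments. Unset Strict Implicit. Unset Printing Implicit Defensive.
Import Order.TTheory GRing.Theory Num.Theory.
Local Open Scope ring_scope.

(* A token-level policy: pi x s z = pi(z | [x, s]), s = generated prefix. *)
Definition is_policy (R : realType) (X : Type) (V : finType)
  (pi : X -> seq V -> V -> R) : Prop :=
  forall x s, (forall z, 0 <= pi x s z) /\ \sum_z pi x s z = 1.

Definition is_distr (R : realType) (I : finType) (p : I -> R) : Prop :=
  (forall i, 0 <= p i) /\ \sum_i p i = 1.

Definition traj_prob (R : realType) (X : Type) (V : finType) (T : nat)
  (pi : X -> seq V -> V -> R) (x : X) (tau : T.-tuple V) : R :=
  \prod_(i < T) pi x (take i tau) (tnth tau i).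

Definition expect (R : realType) (I : finType) (rho : I -> R) (f : I -> R) : R :=
  \sum_i rho i * f i.

(* KL divergence (convention 0 log 0 = 0; q assumed positive where used). *)
Definition KL (R : realType) (I : finType) (p q : I -> R) : R :=
  \sum_i (if p i == 0 then 0 else p i * ln (p i / q i)).

Definition rho_BL (R : realType) (X : Type) (V : finType) (T : nat)
  (beta : R) (r : X -> T.-tuple V -> R) (rhoSFT : X -> T.-tuple V -> R)
  (x : X) (tau : T.-tuple V) : R :=
  rhoSFT x tau * expR (r x tau / beta)
  / \sum_(tau' : T.-tuple V) rhoSFT x tau' * expR (r x tau' / beta).

(* TQ*(s,z) = E_{tau ~ rho_BL(. | [x,s,z])} [ r([x,s,z], tau) ]:
   conditional expectation of the reward of the full response given its
   prefix equals s ++ [z]. *)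
Definition TQstar (R : realType) (X : Type) (V : finType) (T : nat)
  (rhoBL : X -> T.-tuple V -> R) (r : X -> T.-tuple V -> R)
  (x : X) (s : seq V) (z : V) : R :=
  (\sum_(tau : T.-tuple V | take (size s).+1 tau == rcons s z) rhoBL x tau * r x tau)
  / (\sum_(tau : T.-tuple V | take (size s).+1 tau == rcons s z) rhoBL x tau).

Definition pi_alg (R : realType) (X : Type) (V : finType)
  (alpha : R) (piBL : X -> seq V -> V -> R) (TQ : X -> seq V -> V -> R)
  (x : X) (s : seq V) (z : V) : R :=
  piBL x s z * expR (TQ x s z / alpha)
  / \sum_(z' : V) piBL x s z' * expR (TQ x s z' / alpha).

(* h_alpha(x) = sum_{t=1}^{T-1} E_{y_<t ~ rho_alg}[ KL(pi_alg(.|[x,y_<t]) || pi_BL(.|[x,y_<t])) ];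
   0-indexed: prefixes of length t = 0 .. T-2; the expectation over the prefix
   marginal is written as an expectation over full trajectories. *)
Definition h_alpha (R : realType) (X : Type) (V : finType) (T : nat)
  (piAlg piBL : X -> seq V -> V -> R) (x : X) : R :=
  \sum_(t < T.-1) \sum_(tau : T.-tuple V)
     traj_prob piAlg x tau * KL (piAlg x (take t tau)) (piBL x (take t tau)).

(* Main.v *)
Require Import Defs.
From mathcomp Require Import all_boot all_order all_algebra.
From mathcomp Require Import all_classical all_reals all_analysis.
From mathcomp Require Import ring lra.
Import Order.TTheory GRing.Theory Num.Theory.
Local Open Scope ring_scope.
Set Implicit Arguments. Unset Strict Implicit.

Fixpoint SU (R : realType) (V : finType) (n : nat) (h : seq V -> R) : R :=
  match n with 0 => h [::] | n'.+1 => \sum_z SU n' (fun u => h (z :: u)) end.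
Arguments SU {R V}.

Lemma SU_ext (R : realType) (V : finType) n (h h' : seq V -> R) :
  (forall u, size u = n -> h u = h' u) -> SU n h = SU n h'.
Proof.
elim: n h h' => [|n IH] h h' H /=; first exact: H.
apply: eq_bigr => z _; apply: IH => u Hu; apply: H; rewrite /= Hu.
done.
Qed.

Lemma SU_le (R : realType) (V : finType) n (h h' : seq V -> R) :
  (forall u, size u = n -> h u <= h' u) -> SU n h <= SU n h'.
Proof.
elim: n h h' => [|n IH] h h' H /=; first exact: H.
apply: ler_sum => z _; apply: IH => u Hu; apply: H; rewrite /= Hu.
done.
Qed.

Lemma SU_B (R : realType) (V : finType) n (h h' : seq V -> R) :
  SU n (fun u => h u - h' u) = SU n h - SU n h'.
Proof.
elim: n h h' => [|n IH] h h' //=.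
rewrite -sumrB; apply: eq_bigr => z _; exact: IH.
Qed.

Lemma SU_Z (R : realType) (V : finType) n c (h : seq V -> R) :
  SU n (fun u => c * h u) = c * SU n h.
Proof.
elim: n h => [|n IH] h //=.
rewrite mulr_sumr; apply: eq_bigr => z _; exact: IH.
Qed.

Lemma SU_0 (R : realType) (V : finType) n : SU n (fun u : seq V => 0 : R) = 0.
Proof. elim: n => [|n IH] //=; by rewrite big1. Qed.

Lemma SU_split (R : realType) (V : finType) m n N (h : seq V -> R) :
  (m + n)%N = N -> SU N h = SU m (fun a => SU n (fun b => h (a ++ b))).
Proof.
move=> <-; elim: m h => [|m IH] h //=.
apply: eq_bigr => z _; exact: IH.
Qed.

Lemma SU_rcons (R : realType) (V : finType) n (h : seq V -> R) :
  SU n.+1 h = SU n (fun a => \sum_z h (rcons a z)).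
Proof.
rewrite (@SU_split R V n 1 n.+1) ?addn1 //.
apply: SU_ext => a _ /=; apply: eq_bigr => z _; by rewrite cats1.
Qed.

Lemma SU_delta (R : realType) (V : finType) k (p : seq V) (G : seq V -> R) :
  size p = k -> SU k (fun a => if a == p then G a else 0) = G p.
Proof.
elim: k p G => [|k IH] [|z0 p] G //= [Hp].
rewrite (bigD1 z0) //= big1 ?addr0.
  rewrite -(IH p (fun a => G (z0 :: a))) //; apply: SU_ext => u _.
  by rewrite eqseq_cons eqxx.
move=> z Hz; transitivity (SU k (fun _ : seq V => 0 : R)); last exact: (@SU_0 R V k).
apply: SU_ext => u _.
by rewrite eqseq_cons (negbTE Hz).
Qed.

Lemma SU_tuple (R : realType) (V : finType) n (h : seq V -> R) :
  \sum_(t : n.-tuple V) h t = SU n h.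
Proof.
elim: n h => [|n IH] h /=.
  rewrite (eq_bigr (fun _ => h [::])); last by move=> t _; rewrite tuple0.
  by rewrite sumr_const card_tuple expn0.
rewrite -(eq_bigr _ (fun z _ => IH (fun u => h (z :: u)))).
rewrite pair_big /=.
rewrite (reindex (fun p : V * n.-tuple V => [tuple of p.1 :: p.2])) /=.
  by apply: eq_bigr => -[z t] _.
exists (fun t : n.+1.-tuple V => (thead t, [tuple of behead t])).
  move=> [z t] _ /=; rewrite theadE; congr pair; exact: val_inj.
move=> t _ /=; by rewrite -tuple_eta.
Qed.
Fixpoint tpa (R : realType) (V : finType) (pi : seq V -> V -> R) (p u : seq V) : R :=
  match u with [::] => 1 | z :: u' => pi p z * tpa pi (rcons p z) u' end.
Arguments tpa {R V}.

Lemma tpa_cat (R : realType) (V : finType) (pi : seq V -> V -> R) u1 u2 p :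
  tpa pi p (u1 ++ u2) = tpa pi p u1 * tpa pi (p ++ u1) u2.
Proof.
elim: u1 p => [|z u1 IH] p /=; first by rewrite mul1r cats0.
by rewrite IH mulrA cat_rcons.
Qed.

Lemma tpa_rcons (R : realType) (V : finType) (pi : seq V -> V -> R) u z p :
  tpa pi p (rcons u z) = tpa pi p u * pi (p ++ u) z.
Proof. by rewrite -cats1 tpa_cat /= mulr1. Qed.

Lemma tpa_ge0 (R : realType) (V : finType) (pi : seq V -> V -> R) u p :
  (forall s z, 0 <= pi s z) -> 0 <= tpa pi p u.
Proof.
move=> H; elim: u p => [|z u IH] p /=; first exact: ler01.
by rewrite mulr_ge0.
Qed.

Lemma tpa_mass (R : realType) (V : finType) (pi : seq V -> V -> R) n p :
  (forall s, \sum_z pi s z = 1) -> SU n (tpa pi p) = 1.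
Proof.
move=> H; elim: n p => [|n IH] p //=.
rewrite -(H p); apply: eq_bigr => z _ /=.
by rewrite (@SU_Z _ _ n (pi p z) (tpa pi (rcons p z))) IH mulr1.
Qed.

Lemma tpa_prod (R : realType) (V : finType) (pi : seq V -> V -> R) (v0 : V) u p :
  \prod_(0 <= i < size u) pi (p ++ take i u) (nth v0 u i) = tpa pi p u.
Proof.
elim: u p => [|z u IH] p /=; first by rewrite big_geq.
rewrite big_nat_recl //= cats0 -IH; congr (_ * _).
by apply: eq_bigr => i _ /=; rewrite cat_rcons.
Qed.

Lemma traj_tpa (R : realType) (X : Type) (V : finType) T (pi : X -> seq V -> V -> R) x
  (tau : T.-tuple V) : traj_prob pi x tau = tpa (pi x) [::] tau.
Proof.
rewrite /traj_prob; case: T tau => [|n] tau.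
  by rewrite big_ord0 tuple0.
rewrite (eq_bigr (fun i : 'I_n.+1 => pi x (take i tau) (nth (thead tau) tau i))); last first.
  by move=> i _; rewrite (tnth_nth (thead tau)).
rewrite -(big_mkord xpredT (fun i => pi x (take i tau) (nth (thead tau) tau i))).
by rewrite -(@tpa_prod _ _ (pi x) (thead tau)) size_tuple.
Qed.
Lemma KLt_ge (R : realType) (a b : R) : 0 <= a -> 0 < b ->
  a - b <= (if a == 0 then 0 else a * ln (a / b)).
Proof.
move=> a0 b0; case: eqP => [->|/eqP an0]; first by rewrite sub0r oppr_le0 ltW.
have ap : 0 < a by rewrite lt_def an0.
have h1 : ln (b / a) <= b / a - 1.
  have e : 1 + (b / a - 1) = b / a by rewrite addrC subrK.
  have := @le_ln1Dx R (b / a - 1); rewrite e; apply.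
  have : 0 < b / a by rewrite divr_gt0.
  lra.
have h2 : ln (a / b) = - ln (b / a).
  by rewrite !ln_div ?posrE // opprB.
rewrite h2 mulrN; have h3 : a * ln (b / a) <= a * (b / a - 1) by rewrite ler_pM2l.
have h4 : a * (b / a - 1) = b - a by field; rewrite an0.
lra.
Qed.

Lemma KL_ge0 (R : realType) (I : finType) (p q : I -> R) :
  is_distr p -> (forall i, 0 < q i) -> \sum_i q i = 1 -> 0 <= KL p q.
Proof.
move=> [p0 p1] q0 q1; rewrite /KL.
have H : \sum_i (p i - q i) <= \sum_i (if p i == 0 then 0 else p i * ln (p i / q i)).
  by apply: ler_sum => i _; apply: KLt_ge.
by move: H; rewrite sumrB p1 q1 subrr.
Qed.

Lemma sum_gt0 (R : realType) (I : finType) (F : I -> R) (i0 : I) :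
  (forall i, 0 < F i) -> 0 < \sum_i F i.
Proof.
move=> H; rewrite (bigD1 i0) //=.
have : 0 <= \sum_(i | i != i0) F i by apply: sumr_ge0 => i _; apply: ltW.
have := H i0; lra.
Qed.

Lemma distr_elt (R : realType) (I : finType) (p : I -> R) :
  is_distr p -> exists i : I, true.
Proof.
move=> [_ p1]; case: (pickP (xpredT : pred I)) => [i _|H]; first by exists i.
by move: p1; rewrite big_pred0 // => /eqP; rewrite eq_sym oner_eq0.
Qed.

Lemma gibbs (R : realType) (I : finType) (p q c : I -> R) (beta : R) :
  0 < beta -> is_distr p -> (forall i, 0 < q i) ->
  let Z := \sum_i q i * expR (c i / beta) in
  expect p c - beta * KL p q =
  beta * ln Z - beta * KL p (fun i => q i * expR (c i / beta) / Z).
Proof.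
move=> b0 pd q0 Z.
have [i0 _] := distr_elt pd; case: pd => p0 p1.
have Z0 : 0 < Z.
  by rewrite /Z; apply: (@sum_gt0 R I _ i0) => i; rewrite mulr_gt0 ?expR_gt0.
have -> : beta * ln Z = \sum_i p i * (beta * ln Z) by rewrite -mulr_suml p1 mul1r.
rewrite /expect /KL !mulr_sumr -!sumrB; apply: eq_bigr => i _.
case: eqP => [->|/eqP pn0]; first by rewrite !mul0r !mulr0 subrr.
have pp : 0 < p i by rewrite lt_def pn0 p0.
have qi := q0 i; have ei := expR_gt0 (c i / beta).
have bp : 0 < q i * expR (c i / beta) / Z by rewrite divr_gt0 ?mulr_gt0.
have E : p i / q i = (p i / (q i * expR (c i / beta) / Z)) * (expR (c i / beta) / Z).
  by field; rewrite !gt_eqF.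
have L : ln (expR (c i / beta) / Z) = c i / beta - ln Z.
  by rewrite ln_div ?posrE // expRK.
have L2 : ln (p i / q i) = ln (p i / (q i * expR (c i / beta) / Z)) + (c i / beta - ln Z).
  by rewrite E lnM ?posrE ?divr_gt0 ?mulr_gt0 // L.
rewrite L2.
by field; rewrite gt_eqF.
Qed.
Lemma D_gt0 (R : realType) (V : finType) (BL e : V -> R) :
  (forall z, 0 <= BL z) -> \sum_z BL z = 1 -> (forall z, 0 < e z) ->
  0 < \sum_z BL z * e z.
Proof.
move=> B0 B1 e0.
have H : 0 <= \sum_z BL z * e z by apply: sumr_ge0 => z _; rewrite mulr_ge0 // ltW.
rewrite lt_def H andbT; apply/eqP => /psumr_eq0P H0.
have : \sum_z BL z = 0.
  apply: big1 => z _.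
  have /eqP := H0 (fun i _ => mulr_ge0 (B0 i) (ltW (e0 i))) z isT.
  by rewrite mulf_eq0 (gt_eqF (e0 z)) orbF => /eqP.
by rewrite B1 => /eqP; rewrite oner_eq0.
Qed.

Lemma alg_distr (R : realType) (V : finType) (BL e : V -> R) :
  (forall z, 0 <= BL z) -> \sum_z BL z = 1 -> (forall z, 0 < e z) ->
  is_distr (fun z => BL z * e z / \sum_z' BL z' * e z').
Proof.
move=> B0 B1 e0; have D0 := D_gt0 B0 B1 e0; split.
  by move=> z; rewrite divr_ge0 ?mulr_ge0 // ltW.
by rewrite -mulr_suml divff // gt_eqF.
Qed.

Lemma variational (R : realType) (V : finType) (BL Q : V -> R) (alpha : R) :
  0 < alpha -> (forall z, 0 < BL z) -> \sum_z BL z = 1 ->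
  \sum_z BL z * Q z +
  alpha * KL (fun z => BL z * expR (Q z / alpha) / \sum_z' BL z' * expR (Q z' / alpha)) BL
  <= \sum_z (BL z * expR (Q z / alpha) / \sum_z' BL z' * expR (Q z' / alpha)) * Q z.
Proof.
move=> a0 B0 B1.
set D := \sum_z' BL z' * expR (Q z' / alpha).
have B0' : forall z, 0 <= BL z by move=> z; apply: ltW.
have e0 : forall z, 0 < expR (Q z / alpha) by move=> z; apply: expR_gt0.
have D0 : 0 < D := D_gt0 B0' B1 e0.
have [A0 A1] := alg_distr B0' B1 e0; rewrite -/D in A0 A1.
set A := fun z => BL z * expR (Q z / alpha) / D.
change (forall i, 0 <= A i) in A0; change (\sum_z A z = 1) in A1.
have Ap : forall z, 0 < A z by move=> z; rewrite /A divr_gt0 ?mulr_gt0.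
have K := KL_ge0 (conj B0' B1) Ap A1.
suff E : \sum_z A z * Q z - alpha * KL A BL - \sum_z BL z * Q z =
         alpha * KL BL A + alpha * ln D * (\sum_z A z - \sum_z BL z).
  rewrite A1 B1 subrr mulr0 addr0 in E.
  have : 0 <= alpha * KL BL A by rewrite mulr_ge0 // ltW.
  lra.
rewrite /KL -sumrB !mulr_sumr -!sumrB -big_split /=; apply: eq_bigr => z _.
have Az := Ap z; have Bz := B0 z; have ez := e0 z.
rewrite (gt_eqF Az) (gt_eqF Bz).
have E1 : A z / BL z = expR (Q z / alpha) / D by rewrite /A; field; rewrite !gt_eqF.
have E2 : BL z / A z = D / expR (Q z / alpha) by rewrite /A; field; rewrite !gt_eqF.
rewrite E1 E2 !ln_div ?posrE // expRK.
by field; rewrite gt_eqF.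
Qed.
Lemma SU_D (R : realType) (V : finType) n (h h' : seq V -> R) :
  SU n (fun u => h u + h' u) = SU n h + SU n h'.
Proof.
elim: n h h' => [|n IH] h h' //=.
rewrite -big_split; apply: eq_bigr => z _; exact: IH.
Qed.

Lemma SU_if (R : realType) (V : finType) n (b : bool) (h : seq V -> R) :
  SU n (fun u => if b then h u else 0) = if b then SU n h else 0.
Proof. by case: b => //; exact: SU_0. Qed.

Lemma marg (R : realType) (V : finType) (pi : seq V -> V -> R) k T (K : seq V -> R) :
  (forall s, \sum_z pi s z = 1) -> (k <= T)%N ->
  SU T (fun u => tpa pi [::] u * K (take k u)) = SU k (fun a => tpa pi [::] a * K a).
Proof.
move=> H kT; rewrite (@SU_split _ _ k (T - k) T) ?subnKC //.
apply: SU_ext => a Ha.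
rewrite -(mulr1 (tpa pi [::] a * K a)) -(tpa_mass (T - k)%N a H) -SU_Z.
apply: SU_ext => b _; by rewrite tpa_cat take_size_cat // cat0s mulrAC.
Qed.
Lemma filt (R : realType) (V : finType) (pi : seq V -> V -> R) T (p : seq V) (F : seq V -> R) :
  (size p <= T)%N ->
  SU T (fun u => if take (size p) u == p then tpa pi [::] u * F u else 0) =
  tpa pi [::] p * SU (T - size p) (fun b => tpa pi p b * F (p ++ b)).
Proof.
move=> pT; rewrite (@SU_split _ _ (size p) (T - size p) T) ?subnKC //.
transitivity (SU (T - size p) (fun b => tpa pi [::] (p ++ b) * F (p ++ b))); last first.
  rewrite -SU_Z; apply: SU_ext => b _; by rewrite tpa_cat mulrA.
rewrite -(@SU_delta _ _ (size p) p (fun a => SU (T - size p) (fun b => tpa pi [::] (a ++ b) * F (a ++ b)))) //.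
apply: SU_ext => a Ha.
rewrite -SU_if; apply: SU_ext => b _; by rewrite take_size_cat.
Qed.

Lemma tpa_pos (R : realType) (V : finType) (pi : seq V -> V -> R) T (v0 : V) :
  (forall s z, 0 <= pi s z) -> (forall u, size u = T -> 0 < tpa pi [::] u) ->
  forall p, (size p <= T)%N -> 0 < tpa pi [::] p.
Proof.
move=> H0 Hpos p pT.
have := Hpos (p ++ nseq (T - size p) v0); rewrite size_cat size_nseq subnKC // => /(_ erefl).
rewrite tpa_cat cat0s lt_def => /andP [Hne _].
rewrite lt_def tpa_ge0 // andbT; apply: contraNneq Hne => ->; by rewrite mul0r.
Qed.
Definition Gb (R : realType) (V : finType) (BL : seq V -> V -> R) (Rw : seq V -> R) T (a : seq V) :=
  SU (T - size a) (fun u => tpa BL a u * Rw (a ++ u)).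

Lemma Gb_rec (R : realType) (V : finType) (BL : seq V -> V -> R) (Rw : seq V -> R) T a :
  (size a < T)%N -> Gb BL Rw T a = \sum_z BL a z * Gb BL Rw T (rcons a z).
Proof.
move=> aT; rewrite /Gb -(subnSK aT) /=; apply: eq_bigr => z _; rewrite size_rcons.
rewrite -SU_Z; apply: SU_ext => u _ /=; by rewrite cat_rcons mulrA.
Qed.

Lemma perf (R : realType) (V : finType) (BL ALG Q : seq V -> V -> R) (Rw : seq V -> R) T alpha :
  (forall s z, 0 <= ALG s z) ->
  (forall a z, (size a < T)%N -> Q a z = Gb BL Rw T (rcons a z)) ->
  (forall a, (size a < T)%N ->
     \sum_z BL a z * Q a z + alpha * KL (ALG a) (BL a) <= \sum_z ALG a z * Q a z) ->
  SU T (fun u => tpa BL [::] u * Rw u) +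
  alpha * \sum_(k < T) SU k (fun a => tpa ALG [::] a * KL (ALG a) (BL a))
  <= SU T (fun u => tpa ALG [::] u * Rw u).
Proof.
move=> A0 hQ hvar.
pose W k := SU k (fun a => tpa ALG [::] a * Gb BL Rw T a).
pose E k := SU k (fun a => tpa ALG [::] a * KL (ALG a) (BL a)).
have step : forall k, (k < T)%N -> W k + alpha * E k <= W k.+1.
  move=> k kT; rewrite /W /E SU_rcons -SU_Z -SU_D; apply: SU_le => a Ha.
  have aT : (size a < T)%N by rewrite Ha.
  rewrite Gb_rec //.
  have e1 : \sum_z BL a z * Gb BL Rw T (rcons a z) = \sum_z BL a z * Q a z.
    by apply: eq_bigr => z _; rewrite hQ.
  have e2 : \sum_z tpa ALG [::] (rcons a z) * Gb BL Rw T (rcons a z) =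
            tpa ALG [::] a * \sum_z ALG a z * Q a z.
    by rewrite mulr_sumr; apply: eq_bigr => z _; rewrite tpa_rcons cat0s hQ // mulrA.
  rewrite e1 e2.
  have -> : tpa ALG [::] a * (\sum_z BL a z * Q a z) +
            alpha * (tpa ALG [::] a * KL (ALG a) (BL a)) =
            tpa ALG [::] a * (\sum_z BL a z * Q a z + alpha * KL (ALG a) (BL a)) by ring.
  by rewrite ler_wpM2l ?tpa_ge0 ?hvar.
have tel : forall k, (k <= T)%N -> W 0%N + alpha * \sum_(j < k) E j <= W k.
  elim=> [|k IH] kT; first by rewrite big_ord0 mulr0 addr0.
  rewrite big_ord_recr /= mulrDr addrA.
  have := IH (ltnW kT); have := step k kT; lra.
have := tel T (leqnn T).
have -> : W 0%N = SU T (fun u => tpa BL [::] u * Rw u).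
  by rewrite /W /= /Gb subn0 mul1r.
have -> : W T = SU T (fun u => tpa ALG [::] u * Rw u).
  rewrite /W; apply: SU_ext => a Ha; by rewrite /Gb Ha subnn /= mul1r cats0.
done.
Qed.
Lemma tpa_ratio (R : realType) (V : finType) (ALG BL : seq V -> V -> R) (c : R) :
  (forall s z, 0 <= ALG s z) -> (forall s z, ALG s z <= BL s z * c) ->
  forall u p, tpa ALG p u <= tpa BL p u * c ^+ size u.
Proof.
move=> A0 Ac; elim=> [|z u IH] p /=; first by rewrite expr0 mulr1.
rewrite exprS.
have -> : BL p z * tpa BL (rcons p z) u * (c * c ^+ size u) =
          (BL p z * c) * (tpa BL (rcons p z) u * c ^+ size u) by ring.
by apply: ler_pM => //; apply: tpa_ge0.
Qed.

Lemma div_bound (R : realType) (B e E D : R) :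
  0 <= B -> 0 <= e -> e <= E -> 1 <= D -> B * e / D <= B * E.
Proof.
move=> B0 e0 eE D1; have D0 : 0 < D by apply: lt_le_trans D1.
rewrite ler_pdivrMr //.
have h1 : B * e <= B * E by rewrite ler_wpM2l.
have h2 : B * E <= B * E * D by rewrite ler_peMr // mulr_ge0 // (le_trans e0).
exact: le_trans h1 h2.
Qed.

Lemma tuple_SU (R : realType) (V : finType) T (F : T.-tuple V -> R) (G : seq V -> R) :
  (forall tau : T.-tuple V, F tau = G tau) -> \sum_tau F tau = SU T G.
Proof. by move=> H; rewrite -SU_tuple; apply: eq_bigr => tau _. Qed.

Unset Implicit Arguments.

Theorem theorem1 (R : realType) (X : Type) (V : finType) (T : nat)
  (r : X -> T.-tuple V -> R) (piSFT piBL : X -> seq V -> V -> R)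
  (beta alpha : R) (rhostar : X -> T.-tuple V -> R) :
  0 < beta -> 0 < alpha ->
  is_policy piSFT -> (forall x s z, 0 < piSFT x s z) ->
  is_policy piBL ->
  (forall x tau, traj_prob piBL x tau = rho_BL beta r (traj_prob piSFT) x tau) ->
  (forall x, is_distr (rhostar x) /\
     forall rho : T.-tuple V -> R, is_distr rho ->
       expect rho (r x) <= expect (rhostar x) (r x)) ->
  let rhoSFT := traj_prob piSFT in
  let rhoBL := rho_BL beta r rhoSFT in
  let piAlg := pi_alg alpha piBL (TQstar rhoBL r) in
  let rhoAlg := traj_prob piAlg in
  (forall x,
     expect (rhostar x) (r x) - expect (rhoAlg x) (r x)
       <= beta * KL (rhostar x) (rhoSFT x) - alpha * h_alpha T piAlg piBL x
     /\ 0 <= h_alpha T piAlg piBL x) /\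
  (forall Rmax : R, (forall x tau, 0 <= r x tau <= Rmax) ->
     forall x, KL (rhoAlg x) (rhoSFT x) <= (beta^-1 + T%:R / alpha) * Rmax).
Proof.
move=> b0 a0 HS HSpos HB Hbl Hstar rhoSFT rhoBL piAlg rhoAlg.
have facts : forall x,
  [/\ (forall tau, rhoSFT x tau = tpa (piSFT x) [::] tau),
      (forall tau, rhoBL x tau = tpa (piBL x) [::] tau),
      (forall tau, rhoAlg x tau = tpa (piAlg x) [::] tau),
      (forall tau, 0 < rhoSFT x tau) &
      (forall tau, 0 < rhoBL x tau)].
  move=> x.
  have q0 : forall tau, 0 < rhoSFT x tau.
    by move=> tau; rewrite /rhoSFT /traj_prob; apply: prodr_gt0 => i _; exact: HSpos.
  split => //; try by move=> tau; rewrite ?/rhoBL -?Hbl; exact: traj_tpa.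
  move=> tau; rewrite /rhoBL /rho_BL divr_gt0 ?mulr_gt0 ?expR_gt0 //.
  by apply: (sum_gt0 tau) => i; rewrite mulr_gt0 ?expR_gt0.
have ALGpol : forall x s, is_distr (piAlg x s).
  move=> x s; have [B0 B1] := HB x s.
  exact: (alg_distr (BL := piBL x s) (e := fun z => expR (TQstar rhoBL r x s z / alpha)) B0 B1 (fun z => expR_gt0 _)).
suff key : forall x,
  (expect (rhostar x) (r x) - expect (rhoAlg x) (r x)
     <= beta * KL (rhostar x) (rhoSFT x) - alpha * h_alpha T piAlg piBL x
   /\ 0 <= h_alpha T piAlg piBL x) /\
  (forall Rmax : R, (forall x tau, 0 <= r x tau <= Rmax) ->
     KL (rhoAlg x) (rhoSFT x) <= (beta^-1 + T%:R / alpha) * Rmax).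
  by split; [move=> x; exact: (key x).1 | move=> Rmax H x; exact: ((key x).2 Rmax H)].
move=> x.
have [f1 f2 f3 q0 bpos] := facts x.
have [v0 _] := distr_elt (HS x [::]).
pose tau0 := [tuple of nseq T v0].
pose Rw := fun u : seq V => r x (insubd tau0 u).
have Rwv : forall tau : T.-tuple V, r x tau = Rw tau by move=> tau; rewrite /Rw valKd.
have Bnn : forall s z, 0 <= piBL x s z by move=> s z; case: (HB x s) => H _; exact: H.
have Anneg : forall s z, 0 <= piAlg x s z by move=> s z; case: (ALGpol x s) => H _; exact: H.
have SFTm : \sum_tau rhoSFT x tau = 1.
  rewrite (tuple_SU (G := tpa (piSFT x) [::])) //; apply: tpa_mass => s; by case: (HS x s).
have BLm : \sum_tau rhoBL x tau = 1.
  rewrite (tuple_SU (G := tpa (piBL x) [::])) //; apply: tpa_mass => s; by case: (HB x s).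
have ALGm : \sum_tau rhoAlg x tau = 1.
  rewrite (tuple_SU (G := tpa (piAlg x) [::])) //; apply: tpa_mass => s; by case: (ALGpol x s).
have BLpos : forall u, size u = T -> 0 < tpa (piBL x) [::] u.
  move=> u Hu; have := bpos (insubd tau0 u); rewrite f2 insubdK //; exact/eqP.
have Bpos2 : forall p, (size p <= T)%N -> 0 < tpa (piBL x) [::] p := tpa_pos v0 Bnn BLpos.
have BLp : forall a z, (size a < T)%N -> 0 < piBL x a z.
  move=> a z aT; have := Bpos2 (rcons a z); rewrite size_rcons => /(_ aT).
  rewrite tpa_rcons cat0s lt_def => /andP [ne _]; rewrite lt_def Bnn andbT.
  by apply: contraNneq ne => ->; rewrite mulr0.
have hQ : forall a z, (size a < T)%N -> TQstar rhoBL r x a z = Gb (piBL x) Rw T (rcons a z).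
  move=> a z aT; rewrite /TQstar !big_mkcond /=.
  rewrite (tuple_SU (G := fun u => if take (size (rcons a z)) u == rcons a z then tpa (piBL x) [::] u * Rw u else 0)); last first.
    by move=> tau; rewrite size_rcons f2 Rwv.
  rewrite big_mkcond /=.
  rewrite (tuple_SU (G := fun u => if take (size (rcons a z)) u == rcons a z then tpa (piBL x) [::] u * (fun _ => 1) u else 0)); last first.
    move=> tau; rewrite size_rcons f2 /=; case: ifP => // _; exact: (esym (mulr1 _)).
  rewrite !filt ?size_rcons //.
  have e1 : SU (T - (size a).+1) (fun b => tpa (piBL x) (rcons a z) b * 1) = 1.
    rewrite (SU_ext (h' := tpa (piBL x) (rcons a z))); last by move=> u _; rewrite mulr1.
    by apply: tpa_mass => s; case: (HB x s).
  rewrite e1 mulr1.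
  have P0 : 0 < tpa (piBL x) [::] (rcons a z) by apply: Bpos2; rewrite size_rcons.
  by rewrite /Gb size_rcons; field; rewrite gt_eqF.
have hvar : forall a, (size a < T)%N ->
    \sum_z piBL x a z * TQstar rhoBL r x a z + alpha * KL (piAlg x a) (piBL x a)
    <= \sum_z piAlg x a z * TQstar rhoBL r x a z.
  move=> a aT.
  exact: (@variational R V (piBL x a) (TQstar rhoBL r x a) alpha a0 (fun z => BLp a z aT) (HB x a).2).
have P := perf Anneg hQ hvar.
pose Ek k := SU k (fun a => tpa (piAlg x) [::] a * KL (piAlg x a) (piBL x a)).
have Eb : expect (rhoBL x) (r x) = SU T (fun u => tpa (piBL x) [::] u * Rw u).
  by apply: tuple_SU => tau; rewrite f2 Rwv.
have Ea : expect (rhoAlg x) (r x) = SU T (fun u => tpa (piAlg x) [::] u * Rw u).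
  by apply: tuple_SU => tau; rewrite f3 Rwv.
have P' : expect (rhoBL x) (r x) + alpha * \sum_(k < T) Ek k <= expect (rhoAlg x) (r x).
  by rewrite Eb Ea; exact: P.
have Ek0 : forall k, (k < T)%N -> 0 <= Ek k.
  move=> k kT; rewrite /Ek; apply: le_trans (_ : SU k (fun _ => 0) <= _).
    by rewrite SU_0.
  apply: SU_le => a Ha; rewrite mulr_ge0 ?tpa_ge0 //.
  by apply: KL_ge0 (ALGpol x a) _ (HB x a).2 => z; apply: BLp; rewrite Ha.
have hE : h_alpha T piAlg piBL x = \sum_(t < T.-1) Ek t.
  rewrite /h_alpha; apply: eq_bigr => t _.
  rewrite (tuple_SU (G := fun u => tpa (piAlg x) [::] u * (fun a => KL (piAlg x a) (piBL x a)) (take t u))); last first.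
    by move=> tau; rewrite traj_tpa.
  apply: (@marg R V (piAlg x) t T (fun a => KL (piAlg x a) (piBL x a))).
    by move=> s; case: (ALGpol x s).
  exact: leq_trans (ltnW (ltn_ord t)) (leq_pred T).
have tT : forall t : 'I_T.-1, (t < T)%N.
  move=> t; exact: leq_trans (ltn_ord t) (leq_pred T).
have h0 : 0 <= h_alpha T piAlg piBL x.
  by rewrite hE; apply: sumr_ge0 => t _; apply: Ek0.
have hle : h_alpha T piAlg piBL x <= \sum_(k < T) Ek k.
  rewrite hE -(big_mkord xpredT Ek) -(big_mkord xpredT Ek).
  rewrite [X in _ <= X](big_cat_nat (n := T.-1)) ?leq_pred //= lerDl.
  rewrite big_nat_cond; apply: sumr_ge0 => i /andP [/andP [_ iT] _]; exact: Ek0.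
split.
  pose Z := \sum_tau rhoSFT x tau * expR (r x tau / beta).
  have G1 : expect (rhostar x) (r x) - beta * KL (rhostar x) (rhoSFT x) =
            beta * ln Z - beta * KL (rhostar x) (rhoBL x).
    exact: (@gibbs R _ (rhostar x) (rhoSFT x) (r x) beta b0 (Hstar x).1 q0).
  have bd : is_distr (rhoBL x) by split => // tau; exact: ltW.
  have G2 : expect (rhoBL x) (r x) - beta * KL (rhoBL x) (rhoSFT x) =
            beta * ln Z - beta * KL (rhoBL x) (rhoBL x).
    exact: (@gibbs R _ (rhoBL x) (rhoSFT x) (r x) beta b0 bd q0).
  have KLbb : KL (rhoBL x) (rhoBL x) = 0.
    rewrite /KL big1 // => tau _; case: ifP => // _; by rewrite divff ?ln1 ?mulr0 // gt_eqF.
  have K1 : 0 <= beta * KL (rhostar x) (rhoBL x).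
    by rewrite mulr_ge0 ?(KL_ge0 (Hstar x).1 bpos BLm) // ltW.
  have K2 : 0 <= beta * KL (rhoBL x) (rhoSFT x).
    by rewrite mulr_ge0 ?(KL_ge0 bd q0 SFTm) // ltW.
  have ha : alpha * h_alpha T piAlg piBL x <= alpha * \sum_(k < T) Ek k.
    by rewrite ler_wpM2l // ltW.
  rewrite KLbb mulr0 subr0 in G2.
  split => //; lra.
move=> Rmax Hr.
have Rm0 : 0 <= Rmax by case/andP: (Hr x tau0) => h1 h2; exact: le_trans h1 h2.
have Qb : forall a z, 0 <= TQstar rhoBL r x a z <= Rmax.
  move=> a z; rewrite /TQstar.
  set num := \sum_(tau | _) _ * _; set den := \sum_(tau | _) _.
  have den0 : 0 <= den by apply: sumr_ge0 => tau _; exact: ltW.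
  have num0 : 0 <= num.
    apply: sumr_ge0 => tau _; apply: mulr_ge0; [exact: ltW | by case/andP: (Hr x tau)].
  have numle : num <= Rmax * den.
    rewrite /num /den mulr_sumr; apply: ler_sum => tau _.
    rewrite mulrC; apply: ler_wpM2r; [exact: ltW | by case/andP: (Hr x tau)].
  case: (eqVneq den 0) => [->|dn0]; first by rewrite invr0 mulr0 lexx Rm0.
  have dp : 0 < den by rewrite lt_def dn0 den0.
  by rewrite divr_ge0 //= ler_pdivrMr // mulrC.
pose EA := expR (Rmax / alpha).
pose EB := expR (Rmax / beta).
have ALGb : forall s z, piAlg x s z <= piBL x s z * EA.
  move=> s z; rewrite /piAlg /pi_alg.
  apply: div_bound; [exact: Bnn | exact: expR_ge0 | | ].
    rewrite /EA ler_expR ler_pM2r ?invr_gt0 //; by case/andP: (Qb s z).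
  case: (HB x s) => _ B1; rewrite -{1}B1; apply: ler_sum => z' _.
  rewrite -{1}(mulr1 (piBL x s z')) ler_wpM2l //.
  have := expR_ge1Dx (TQstar rhoBL r x s z' / alpha).
  have : 0 <= TQstar rhoBL r x s z' / alpha.
    by apply: divr_ge0; [case/andP: (Qb s z') | exact: ltW].
  lra.
have BLb : forall tau, rhoBL x tau <= rhoSFT x tau * EB.
  move=> tau; rewrite /rhoBL /rho_BL.
  apply: div_bound; [exact: ltW | exact: expR_ge0 | | ].
    rewrite /EB ler_expR ler_pM2r ?invr_gt0 //; by case/andP: (Hr x tau).
  rewrite -{1}SFTm; apply: ler_sum => t _.
  rewrite -{1}(mulr1 (rhoSFT x t)); apply: ler_wpM2l; first exact: ltW.
  have := expR_ge1Dx (r x t / beta).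
  have : 0 <= r x t / beta.
    by apply: divr_ge0; [case/andP: (Hr x t) | exact: ltW].
  lra.
pose C := Rmax / beta + T%:R * (Rmax / alpha).
have EC : expR C = EB * EA ^+ T by rewrite /C expRD expRM_natl.
have ratio : forall tau, rhoAlg x tau <= rhoSFT x tau * expR C.
  move=> tau; rewrite f3.
  apply: le_trans (tpa_ratio Anneg ALGb tau [::]) _.
  rewrite size_tuple -f2 EC mulrA ler_wpM2r //; first by rewrite exprn_ge0 // expR_ge0.
have C0 : 0 <= C.
  apply: addr_ge0; first by apply: divr_ge0 => //; exact: ltW.
  by apply: mulr_ge0 => //; apply: divr_ge0 => //; exact: ltW.
have -> : (beta^-1 + T%:R / alpha) * Rmax = \sum_tau rhoAlg x tau * C.
  by rewrite -mulr_suml ALGm mul1r /C; field; rewrite !gt_eqF.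
rewrite /KL; apply: ler_sum => tau _.
have p0 : 0 <= rhoAlg x tau by rewrite f3 tpa_ge0.
case: eqP => [_|/eqP pn0]; first by rewrite mulr_ge0.
have pp : 0 < rhoAlg x tau by rewrite lt_def pn0 p0.
rewrite ler_wpM2l // -[C in _ <= C]expRK ler_ln ?posrE ?divr_gt0 ?expR_gt0 //.
by rewrite ler_pdivrMr // mulrC.
Qed.
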